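(* Let $\boldsymbol{\mathcal V}(x)=\sum_{n\ge0}x^n\sum_{r\in\mathcal V_n}\overline{\d}(r)$. Then \[ \boldsymbol{\mathcal V}=2x\boldsymbol{\mathcal V}+2x^2\boldsymbol{\mathcal M}(x,1)\mathcal V+2x^2\mathcal M(x,1)\boldsymbol{\mathcal V}+2x^2\mathcal V\,\tfrac{\partial}{\partial x}\big(x\mathcal M(x,1)\big)+2x\boldsymbol{\mathcal N}+2x\,\tfrac{\partial}{\partial x}\big(x\mathcal N\big), \] and explicitly \[ \boldsymbol{\mathcal V}(x)=\frac{8x\left(1+\sqrt{1-4x}-x\big(3+\sqrt{1-4x}\big)\right)}{(1-4x)\big(1-4x+\sqrt{1-4x}\big)^3}. \]
   Context: Steps: $U=(1,1)$, $D=(1,-1)$, two distinguishable copies $O_1,O_2$ of $(1,0)$. $\mathcal V_n$: paths starting at $(0,0)$ with $n$ steps in $\{U,D,O_1,O_2\}$, ending anywhere; $\mathcal N_n\subseteq\mathcal V_n$: those staying weakly above the $x$-axis. For a path $r$ with heights $r_0=0,\dots,r_n$, $\overline{\d}(r)=\sum_{i=0}^n|r_i|$. $\mathcal V(x)=\sum|\mathcal V_n|x^n$, $\mathcal N(x)=\sum|\mathcal N_n|x^n$, $\boldsymbol{\mathcal N}(x)=\sum_n x^n\sum_{r\in\mathcal N_n}\overline{\d}(r)$; $\mathcal M(x,1)$ and $\boldsymbol{\mathcal M}(x,1)$ are the generating functions by length, respectively unweighted and weighted by $\overline{\d}$, of paths in $\bigcup_n\mathcal N_n$ that end on the $x$-axis.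 *)

(* Defs.v *)
From mathcomp Require Import all_boot all_order all_algebra.
Set Implicit Arguments. Unset Strict Implicit. Unset Printing Implicit Defensive.
Import GRing.Theory Num.Theory.

(* The four steps: U = (1,1), D = (1,-1), O1, O2 two copies of (1,0). *)
Inductive step := U | D | O1 | O2.

Definition all_steps : seq step := [:: U; D; O1; O2].

Definition dh (s : step) : int :=
  match s with U => 1%Z | D => (-1)%Z | _ => 0%Z end.

Definition hgt (p : seq step) : int := \sum_(s <- p) dh s.

Fixpoint paths (n : nat) : seq (seq step) :=
  match n with
  | 0 => [:: [::]]
  | m.+1 => [seq s :: p | s <- all_steps, p <- paths m]
  end.

Definition heights (p : seq step) : seq int :=
  [seq hgt (take i p) | i <- iota 0 (size p).+1].

Definition dbar (p : seq step) : nat := \sum_(h <- heights p) `|h|%N.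

Definition nonneg (p : seq step) : bool := all (fun h => 0 <= h)%R (heights p).

Definition ends0 (p : seq step) : bool := hgt p == 0%R.

(* coefficient sequences of the generating functions *)
Definition Vc (n : nat) : nat := size (paths n).
Definition Vb (n : nat) : nat := \sum_(p <- paths n) dbar p.
Definition Nc (n : nat) : nat := count nonneg (paths n).
Definition Nb (n : nat) : nat := \sum_(p <- paths n | nonneg p) dbar p.
Definition Mc (n : nat) : nat := count (fun p => nonneg p && ends0 p) (paths n).
Definition Mb (n : nat) : nat := \sum_(p <- paths n | nonneg p && ends0 p) dbar p.

Definition fps := nat -> nat.
Definition fmul (f g : fps) : fps := fun n => \sum_(k < n.+1) f k * g (n - k).
Definition xmul (f : fps) : fps := fun n => if n is m.+1 then f m else 0.
(* coefficients of d/dx (x * f) *)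
Definition dx_x (f : fps) : fps := fun n => n.+1 * f n.

(* Main.v *)
Require Import Defs.
From mathcomp Require Import all_boot all_order all_algebra zify.
Set Implicit Arguments. Unset Strict Implicit. Unset Printing Implicit Defensive.
Import Order.TTheory GRing.Theory Num.Theory.
From HB Require Import structures.

Definition step_eqb (x y : step) : bool :=
  match x, y with U, U | D, D | O1, O1 | O2, O2 => true | _, _ => false end.
Lemma step_eqP : Equality.axiom step_eqb.
Proof. by case; case; constructor. Qed.
HB.instance Definition _ := hasDecEq.Build step step_eqP.

Fixpoint nn (k : int) (p : seq step) : bool :=
  match p with [::] => (0 <= k)%R | s :: p' => (0 <= k)%R && nn (k + dh s)%R p' end.
Fixpoint hs (k : int) (p : seq step) : nat :=
  match p with [::] => `|k|%N | s :: p' => (`|k|%N + hs (k + dh s)%R p')%N end.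

Lemma hgt_nil : hgt [::] = 0%R.
Proof. by rewrite /hgt big_nil. Qed.
Lemma hgt_cons s p : hgt (s :: p) = (dh s + hgt p)%R.
Proof. by rewrite /hgt big_cons. Qed.
Lemma hgt_cat p q : hgt (p ++ q) = (hgt p + hgt q)%R.
Proof. by rewrite /hgt big_cat. Qed.

Lemma iotaS_map m n : iota m.+1 n = [seq i.+1 | i <- iota m n].
Proof. by elim: n m => [|n IH] m //=; rewrite IH. Qed.

Lemma heights_cons s p : heights (s :: p) = 0%R :: [seq (dh s + h)%R | h <- heights p].
Proof.
rewrite /heights.
have -> : iota 0 (size (s :: p)).+1 = 0%N :: [seq i.+1 | i <- iota 0 (size p).+1].
  by rewrite /= iotaS_map.
rewrite map_cons take0 hgt_nil -map_comp; congr (_ :: _).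
rewrite -map_comp; apply: eq_map => i /=; by rewrite hgt_cons.
Qed.
Lemma heights_nil : heights [::] = [:: 0%R].
Proof. by rewrite /heights /= hgt_nil. Qed.

Lemma all_heights k p : all (fun h => 0 <= k + h)%R (heights p) = nn k p.
Proof.
elim: p k => [|s p IH] k; first by rewrite heights_nil /= addr0 andbT.
rewrite heights_cons [nn _ _]/= -IH; move: (heights p) => hp /=; rewrite addr0 all_map; congr (_ && _).
by apply: eq_all => h /=; rewrite addrA.
Qed.

Lemma sum_heights k p : (\sum_(h <- heights p) `|(k + h)%R|%N)%N = hs k p.
Proof.
elim: p k => [|s p IH] k; first by rewrite heights_nil big_seq1 addr0.
rewrite heights_cons [hs _ _]/= -IH; move: (heights p) => hp; rewrite big_cons big_map addr0; congr (_ + _)%N.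
by apply: eq_bigr => h _; rewrite addrA.
Qed.

Lemma nonnegE p : nonneg p = nn 0 p.
Proof. by rewrite /nonneg -all_heights; apply: eq_all => h; rewrite add0r. Qed.
Lemma dbarE p : dbar p = hs 0 p.
Proof. by rewrite /dbar -sum_heights; apply: eq_bigr => h _; rewrite add0r. Qed.

Lemma mem_paths n p : (p \in paths n) = (size p == n).
Proof.
elim: n p => [|n IH] p; first by case: p.
change (p \in [seq s :: q | s <- all_steps, q <- paths n]) with
  (p \in [seq s :: q | s <- all_steps, q <- paths n]).
apply/allpairsP/idP => [[[s' p'] [_ Hp ->]]|].
  by rewrite /= eqSS -IH.
case: p => [//|s q] H; exists (s, q); split => //.
  by clear H; case: s.
by rewrite IH.
Qed.

Lemma uniq_paths n : uniq (paths n).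
Proof.
elim: n => [|n IH] //.
change (uniq [seq s :: q | s <- all_steps, q <- paths n]).
apply: allpairs_uniq => //.
by move=> [a b] [c d] _ _ /= [-> ->].
Qed.

Lemma size_paths n : size (paths n) = (4 ^ n)%N.
Proof.
elim: n => [|n IH] //.
change (size [seq s :: q | s <- all_steps, q <- paths n] = 4 ^ n.+1)%N.
by rewrite size_allpairs IH expnS.
Qed.

Lemma sum_paths_S n (F : seq step -> nat) :
  (\sum_(p <- paths n.+1) F p =
   \sum_(p <- paths n) (F (U :: p) + F (D :: p) + F (O1 :: p) + F (O2 :: p)))%N.
Proof.
change (\sum_(p <- [seq s :: q | s <- all_steps, q <- paths n]) F p =
   \sum_(p <- paths n) (F (U :: p) + F (D :: p) + F (O1 :: p) + F (O2 :: p)))%N.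
rewrite big_allpairs_dep /all_steps !big_cons big_nil !big_split /= addn0.
by rewrite !addnA.
Qed.

Definition fl (s : step) : step := match s with U => D | D => U | x => x end.
Lemma flK : involutive fl. Proof. by case. Qed.
Lemma dh_fl s : dh (fl s) = (- dh s)%R. Proof. by case: s. Qed.

Lemma hs_flip k p : hs (- k)%R (map fl p) = hs k p.
Proof.
elim: p k => [|s p IH] k /=; first by rewrite abszN.
by rewrite abszN dh_fl -opprD IH.
Qed.

Lemma sum_flip n (F : seq step -> nat) :
  (\sum_(p <- paths n) F (map fl p) = \sum_(p <- paths n) F p)%N.
Proof.
rewrite -(big_map (map fl) xpredT F); apply: perm_big; apply: uniq_perm.
- rewrite map_inj_uniq ?uniq_paths //; exact: can_inj (mapK flK).
- exact: uniq_paths.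
move=> p; rewrite -[p in LHS](mapK flK) mem_map; last exact: can_inj (mapK flK).
by rewrite !mem_paths size_map.
Qed.

Lemma Vb_S_prepend n : Vb n.+1 =
  (\sum_(p <- paths n) hs 1 p + \sum_(p <- paths n) hs 1 p + 2 * Vb n)%N.
Proof.
rewrite /Vb sum_paths_S.
under eq_bigr do rewrite !dbarE /= !add0r !add0n.
rewrite !big_split /=.
have -> : (\sum_(p <- paths n) hs (-1) p = \sum_(p <- paths n) hs 1 p)%N.
  rewrite -sum_flip; apply: eq_bigr => p _.
  exact: (hs_flip 1).
rewrite mul2n -addnn /Vb.
under [\sum_(p <- paths n) dbar p]eq_bigr do rewrite dbarE.
by rewrite !addnA.
Qed.

Definition motz (q : seq step) : bool := nn 0 q && (hgt q == 0%R).

Lemma nn_neg k r : (k < 0)%R -> nn k r = false.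
Proof. by case: r => [|s r] /= Hk; rewrite leNgt Hk. Qed.

Lemma nn_cat_hit k q r : nn k q -> (k + hgt q = 0)%R -> nn k (q ++ D :: r) = false.
Proof.
elim: q k => [|s q IH] k /=.
  rewrite hgt_nil addr0 => _ ->; rewrite nn_neg //.
move=> /andP[Hk Hq]; rewrite hgt_cons addrA => H.
by rewrite IH ?andbF.
Qed.

Lemma decomp_uniq k q q' r r' : nn k q -> nn k q' -> (k + hgt q = 0)%R ->
  (k + hgt q' = 0)%R -> q ++ D :: r = q' ++ D :: r' -> q = q' /\ r = r'.
Proof.
elim: q k q' => [|s q IH] k [|s' q'] /=.
- by move=> _ _ _ _ [].
- move=> _ /andP[_ Hq'] H1 _ [E _]; subst s'.
  move: H1; rewrite hgt_nil addr0 => Hk0; rewrite Hk0 in Hq'.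
  by rewrite nn_neg in Hq'.
- move=> /andP[_ Hq] _ _ H1 [E _]; subst s.
  move: H1; rewrite hgt_nil addr0 => Hk0; rewrite Hk0 in Hq.
  by rewrite nn_neg in Hq.
- move=> /andP[_ Hq] /andP[_ Hq']; rewrite !hgt_cons !addrA => H1 H2 [E E'].
  subst s'; have [-> ->] := IH _ _ Hq Hq' H1 H2 E'; by [].
Qed.

Lemma decomp_exists k p : (0 <= k)%R -> ~~ nn k p ->
  exists q r, [/\ nn k q, (k + hgt q = 0)%R & p = q ++ D :: r].
Proof.
elim: p k => [|s p IH] k /= Hk; first by rewrite Hk.
rewrite Hk /=.
case: (lerP 0 (k + dh s)) => H Hn.
  have [q [r [H1 H2 ->]]] := IH _ H Hn.
  exists (s :: q), r; split => //=; first by rewrite Hk.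
  by rewrite hgt_cons addrA.
clear IH; case: s H Hn => /= H _; [exfalso; lia | | exfalso; lia | exfalso; lia].
exists [::], p; split => //; rewrite /hgt big_nil; lia.
Qed.

Definition smalls n := flatten [seq paths k | k <- iota 0 n].

Lemma mem_smalls n p : (p \in smalls n) = (size p < n).
Proof.
apply/flatten_mapP/idP => [[k]|H].
  by rewrite mem_iota mem_paths => Hk /eqP E; lia.
by exists (size p); rewrite ?mem_iota ?mem_paths.
Qed.

Lemma uniq_smalls n : uniq (smalls n).
Proof.
elim: n => [|n IH] //.
rewrite /smalls -addn1 iotaD map_cat flatten_cat /= cats0 -/(smalls n).
rewrite cat_uniq IH uniq_paths andbT /=.
apply/hasPn => p; rewrite mem_paths => /eqP Hp; rewrite mem_smalls; lia.
Qed.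

Lemma prednE m : (0 < m)%N -> m.-1 = (m - 1)%N.
Proof. by case: m => // m _; rewrite subn1. Qed.

Definition QQ n := [seq q <- smalls n | motz q].
Definition LL n := [seq q ++ D :: r | q <- QQ n, r <- paths (n.-1 - size q)].

Lemma LL_perm n : perm_eq (LL n) [seq p <- paths n | ~~ nn 0 p].
Proof.
apply: uniq_perm.
- apply: allpairs_uniq_dep.
  + exact/filter_uniq/uniq_smalls.
  + by move=> x _; exact: uniq_paths.
  move=> u v /allpairsPdep [x [y [Hx Hy ->]]] /allpairsPdep [x' [y' [Hx' Hy' ->]]] /= E.
  move: Hx Hx'; rewrite !mem_filter => /andP[/andP[H1 /eqP H2] _] /andP[/andP[H1' /eqP H2'] _].
  have [E1 E2] := decomp_uniq H1 H1' (etrans (add0r _) H2) (etrans (add0r _) H2') E.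
  by subst.
- exact/filter_uniq/uniq_paths.
move=> p; rewrite mem_filter mem_paths.
apply/allpairsPdep/idP => [[q [r [Hq Hr ->]]]|/andP[Hn /eqP Hs]].
  move: Hq Hr; rewrite mem_filter mem_smalls mem_paths => /andP[/andP[H1 /eqP H2] Hq] /eqP Hr.
  rewrite nn_cat_hit ?add0r //= size_cat /= Hr; apply/eqP; rewrite prednE; move: Hq; move: (size q) => m; lia.
have [q [r [H1 H2 Ep]]] := decomp_exists (lexx (0:int)) Hn.
have Hsz : size p = (size q + (size r).+1)%N by rewrite Ep size_cat.
exists q, r; split => //.
  rewrite mem_filter mem_smalls /motz H1 -[hgt q]add0r H2 eqxx /=; move: Hs Hsz; move: (size p) (size q) (size r) => a b c; lia.
rewrite mem_paths; apply/eqP; move: Hs Hsz; move: (size p) (size q) (size r) => a b c Ha Hb; rewrite prednE; lia.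
Qed.

Lemma sum_iota_ord n (G : nat -> nat) : (\sum_(j <- iota 0 n) G j = \sum_(k < n) G k)%N.
Proof. have -> : iota 0 n = index_iota 0 n by rewrite /index_iota subn0. by rewrite big_mkord. Qed.

Lemma split_sum n (F : seq step -> nat) :
  (\sum_(p <- paths n | ~~ nn 0 p) F p =
   \sum_(k < n) \sum_(q <- paths k | motz q) \sum_(r <- paths (n.-1 - k)) F (q ++ D :: r))%N.
Proof.
rewrite -big_filter -(perm_big _ (LL_perm n)) big_allpairs_dep /QQ big_filter /smalls.
rewrite big_flatten big_map sum_iota_ord.
apply: eq_bigr => k _; rewrite big_seq_cond [RHS]big_seq_cond.
apply: eq_bigr => q /andP[Hq _]; move: Hq; rewrite mem_paths => /eqP -> //.
Qed.

Lemma hs_cat k q s r : hs k (q ++ s :: r) = (hs k q + hs (k + hgt q + dh s)%R r)%N.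
Proof.
elim: q k => [|s' q IH] k /=; first by rewrite hgt_nil addr0.
by rewrite IH hgt_cons !addrA addnA.
Qed.

Lemma hs_shift k q : nn k q -> hs (k + 1)%R q = (hs k q + (size q).+1)%N.
Proof.
elim: q k => [|s q IH] k /=; first lia.
move=> /andP[Hk Hq]; rewrite addrAC IH //. have E : `|(k + 1)%R|%N = (`|k|%N + 1)%N by lia. rewrite E; move: (hs _ q) (size q) => a b; lia.
Qed.

Lemma sum_const_cond (I : Type) (r : seq I) (P : pred I) (c : nat) :
  (\sum_(i <- r | P i) c = c * count P r)%N.
Proof. by rewrite big_const_seq iter_addn_0 mulnC. Qed.

Lemma MbE k : Mb k = (\sum_(q <- paths k | motz q) hs 0 q)%N.
Proof. by apply: eq_big => q; [rewrite nonnegE | rewrite dbarE]. Qed.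
Lemma McE k : Mc k = count motz (paths k).
Proof. by apply: eq_count => q; rewrite nonnegE. Qed.
Lemma NbE n : Nb n = (\sum_(p <- paths n | nn 0 p) hs 0 p)%N.
Proof. by apply: eq_big => q; [rewrite nonnegE | rewrite dbarE]. Qed.
Lemma NcE n : Nc n = count (nn 0) (paths n).
Proof. by apply: eq_count => q; rewrite nonnegE. Qed.
Lemma VbE n : Vb n = (\sum_(p <- paths n) hs 0 p)%N.
Proof. by apply: eq_bigr => q _; rewrite dbarE. Qed.
Lemma VcE n : Vc n = (4 ^ n)%N.
Proof. exact: size_paths. Qed.

Lemma T1_eq n : (\sum_(p <- paths n) hs 1 p = Nb n + n.+1 * Nc n +
  \sum_(k < n) (Mb k * Vc (n.-1 - k) + k.+1 * Mc k * Vc (n.-1 - k) + Mc k * Vb (n.-1 - k)))%N.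
Proof.
rewrite (bigID (fun p => nn 0 p)) /= split_sum.
congr (_ + _)%N.
- rewrite NbE NcE.
  transitivity (\sum_(p <- paths n | nn 0 p) (hs 0 p + n.+1))%N.
    rewrite big_seq_cond [RHS]big_seq_cond; apply: eq_bigr => p /andP[Hp Hn].
    move: Hp; rewrite mem_paths => /eqP Hs.
    by have := hs_shift Hn; rewrite add0r Hs.
  by rewrite big_split /= sum_const_cond mulnC.
- apply: eq_bigr => k _.
  transitivity (\sum_(q <- paths k | motz q) ((hs 0 q + k.+1) * Vc (n.-1 - k) + Vb (n.-1 - k)))%N.
    rewrite big_seq_cond [RHS]big_seq_cond; apply: eq_bigr => q /andP[Hq /andP[H1 /eqP H2]].
    move: Hq; rewrite mem_paths => /eqP Hs.
    under eq_bigr => r _ do rewrite hs_cat H2.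
    rewrite big_split /= VbE; congr (_ + _)%N.
    rewrite sum_const_cond count_predT -/(Vc _) mulnC.
    rewrite mulnC; congr (_ * _)%N.
    by have := hs_shift H1; rewrite add0r Hs.
  rewrite big_split /= -big_distrl /= big_split /= sum_const_cond sum_const_cond -MbE -McE.
  by rewrite mulnDl (mulnC (Vb _)) (mulnC (k.+1)).
Qed.

Lemma fmulC f g n : fmul f g n = fmul g f n.
Proof.
rewrite /fmul (reindex_inj rev_ord_inj) /=; apply: eq_bigr => k _.
by rewrite subSS subKn ?leq_ord // mulnC.
Qed.

Lemma xmul_fmulC f g n : xmul (fmul f g) n = xmul (fmul g f) n.
Proof. by case: n => [|n] //=; rewrite fmulC. Qed.

Lemma xmul_fmul f g n : xmul (fmul f g) n = (\sum_(k < n) f k * g (n.-1 - k))%N.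
Proof. by case: n => [|n] //=; rewrite big_ord0. Qed.

Lemma part1 n : Vb n =
       (2 * xmul Vb n
        + 2 * xmul (xmul (fmul Mb Vc)) n
        + 2 * xmul (xmul (fmul Mc Vb)) n
        + 2 * xmul (xmul (fmul Vc (dx_x Mc))) n
        + 2 * xmul Nb n
        + 2 * xmul (dx_x Nc) n)%N.
Proof.
case: n => [|n]; first by rewrite VbE big_seq1.
have xS : forall f m, xmul f m.+1 = f m by [].
rewrite !xS (xmul_fmulC Vc) !xmul_fmul Vb_S_prepend T1_eq !big_split /=.
rewrite /dx_x.
set A := \sum_(i < n) Mb i * Vc (n.-1 - i).
set B := \sum_(i < n) i.+1 * Mc i * Vc (n.-1 - i).
set C := \sum_(i < n) Mc i * Vb (n.-1 - i).
move: A B C (Vb n) (Nb n) (n.+1 * Nc n) => a b c d e f; lia.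
Qed.

Lemma count_sum (T : Type) (P : pred T) (s : seq T) : count P s = (\sum_(x <- s) P x)%N.
Proof. by elim: s => [|x s IH]; rewrite ?big_nil ?big_cons //= IH. Qed.

Lemma paths_append n : perm_eq (paths n.+1) [seq rcons p s | p <- paths n, s <- all_steps].
Proof.
apply: uniq_perm.
- exact: uniq_paths.
- apply: allpairs_uniq; [exact: uniq_paths | by [] |].
  by move=> [a b] [c d] _ _ /= /rcons_inj [-> ->].
move=> p; rewrite mem_paths; apply/idP/allpairsP => [|[[q s] /= [Hq Hs ->]]].
  case/lastP: p => [//|q s]; rewrite size_rcons eqSS => Hq.
  exists (q, s); split => //=; first by rewrite mem_paths.
  by case: s.
by move: Hq; rewrite mem_paths size_rcons.
Qed.

Definition Aa n := (\sum_(p <- paths n) `|hgt p|%N)%N.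
Definition W (h : int) := (`|(h + 1)%R|%N + `|(h - 1)%R|%N + 2 * `|h|%N)%N.

Lemma W_eq h : W h = (4 * `|h|%N + 2 * (h == 0%R))%N.
Proof. rewrite /W; lia. Qed.

Lemma Vb_S_append n : Vb n.+1 = (4 * Vb n + \sum_(p <- paths n) W (hgt p))%N.
Proof.
rewrite VbE (perm_big _ (paths_append n)) big_allpairs_dep /all_steps VbE big_distrr -big_split /=.
apply: eq_bigr => p _; rewrite !big_cons big_nil.
rewrite -!cats1 !hs_cat /= !add0r /W addr0.
have -> : (hgt p + 1 = hgt p + dh U)%R by [].
move: (hs 0 p) (hgt p) => a h /=; lia.
Qed.

Lemma Aa_S n : Aa n.+1 = (\sum_(p <- paths n) W (hgt p))%N.
Proof.
rewrite /Aa sum_paths_S; apply: eq_bigr => p _; rewrite !hgt_cons /W /=.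
rewrite !add0r; have -> : (- 1 + hgt p = hgt p - 1)%R by rewrite addrC.
rewrite addrC; lia.
Qed.

Lemma hgt_bound p : (- (size p)%:Z <= hgt p <= (size p)%:Z)%R.
Proof.
elim: p => [|s p IH]; first by rewrite hgt_nil.
rewrite hgt_cons /=; case: s => /=; lia.
Qed.

Definition cnt n (j : nat) := count (fun p => hgt p + n%:Z == j%:Z)%R (paths n).

Lemma cnt_S n j : cnt n.+1 j =
  ((if j is j'.+2 then cnt n j' else 0) + cnt n j + 2 * (if j is j'.+1 then cnt n j' else 0))%N.
Proof.
rewrite /cnt count_sum sum_paths_S !count_sum.
have E : forall c, (\sum_(p <- paths n) c)%N = (c * size (paths n))%N.
  by move=> c; rewrite sum_const_cond count_predT.
transitivity (\sum_(p <- paths n) ((if j is j'.+2 then (hgt p + n%:Z == j'%:Z)%R else 0) +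
   (hgt p + n%:Z == j%:Z)%R + 2 * (if j is j'.+1 then (hgt p + n%:Z == j'%:Z)%R else 0)))%N.
  rewrite big_seq [RHS]big_seq; apply: eq_bigr => p; rewrite mem_paths => /eqP Hs.
  have := hgt_bound p; rewrite Hs !hgt_cons /=.
  move: (hgt p) => h Hb; case: j => [|[|j']] /=; lia.
rewrite !big_split /=.
case: j => [|[|j']] /=; rewrite ?E ?mul0n ?count_sum; lia.
Qed.

Lemma cnt_eq n j : cnt n j = 'C(n.*2, j).
Proof.
elim: n j => [|n IH] j.
  by rewrite /cnt /= hgt_nil bin0n; case: j.
rewrite cnt_S doubleS.
case: j => [|[|j']] /=.
- by rewrite !IH !bin0.
- rewrite !IH !binS !bin0 bin1; lia.
- rewrite !IH !binS; lia.
Qed.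

Definition Zc n := count (fun p => hgt p == 0%R) (paths n).
Lemma Zc_eq n : Zc n = 'C(n.*2, n).
Proof.
rewrite -cnt_eq /Zc /cnt; apply: eq_count => p /=.
apply/idP/idP => /eqP H; apply/eqP; lia.
Qed.

Lemma Aa_rec n : Aa n.+1 = (4 * Aa n + 2 * Zc n)%N.
Proof.
rewrite Aa_S; under eq_bigr do rewrite W_eq.
by rewrite big_split /= -!big_distrr /= /Zc count_sum.
Qed.

Lemma Vb_rec n : Vb n.+1 = (4 * Vb n + Aa n.+1)%N.
Proof. by rewrite Vb_S_append Aa_S. Qed.

Lemma binK n : (n.+1 * 'C(n.+1.*2, n.+1) = (4 * n + 2) * 'C(n.*2, n))%N.
Proof.
have H1 := mul_bin_diag (n.+1.*2) n.
have H2 := mul_bin_down (n.*2.+1) n.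
rewrite doubleS /= in H1 *.
have E : (n.*2.+1 - n = n.+1)%N by lia.
rewrite E in H2.
rewrite -H1.
move: H2; move: ('C(n.*2.+1, n)) ('C(n.*2, n)) => a b H2.
have -> : (n.*2.+2 * a = 2 * (n.+1 * a))%N by lia.
rewrite -H2; lia.
Qed.

Lemma Aa_closed n : Aa n = (n * 'C(n.*2, n))%N.
Proof.
elim: n => [|n IH]; first by rewrite /Aa /= big_seq1 hgt_nil.
rewrite Aa_rec IH Zc_eq binK; lia.
Qed.

Lemma Vb_closed n : (3 * Vb n = n * n.*2.+1 * 'C(n.*2, n))%N.
Proof.
elim: n => [|n IH]; first by rewrite VbE big_seq1.
rewrite Vb_rec Aa_closed.
have K := binK n.
have -> : (3 * (4 * Vb n + n.+1 * 'C(n.+1.*2, n.+1)) = 4 * (3 * Vb n) + 3 * (n.+1 * 'C(n.+1.*2, n.+1)))%N by lia.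
rewrite IH.
have -> : (n.+1 * n.+1.*2.+1 * 'C(n.+1.*2, n.+1) = n.+1.*2.+1 * (n.+1 * 'C(n.+1.*2, n.+1)))%N by lia.
rewrite K; move: ('C(n.*2, n)) => c; nia.
Qed.

Lemma Vb_rec2 n : (n.+1 * Vb n.+2 = (4 * n + 10) * Vb n.+1)%N.
Proof.
have H1 := Vb_closed n.+2.
have H2 := Vb_closed n.+1.
have K := binK n.+1.
suff : (3 * (n.+1 * Vb n.+2) = 3 * ((4 * n + 10) * Vb n.+1))%N by lia.
have -> : (3 * (n.+1 * Vb n.+2) = n.+1 * (3 * Vb n.+2))%N by lia.
have -> : (3 * ((4 * n + 10) * Vb n.+1) = (4 * n + 10) * (3 * Vb n.+1))%N by lia.
rewrite H1 H2.
have -> : (n.+1 * (n.+2 * n.+2.*2.+1 * 'C(n.+2.*2, n.+2)) = n.+1 * n.+2.*2.+1 * (n.+2 * 'C(n.+2.*2, n.+2)))%N by lia.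
rewrite K; move: ('C(n.+1.*2, n.+1)) => c; nia.
Qed.

Lemma Vb_pos n : (0 < Vb n.+1)%N.
Proof.
have H := Vb_closed n.+1.
have : (0 < 'C(n.+1.*2, n.+1))%N by rewrite bin_gt0; lia.
move: ('C(n.+1.*2, n.+1)) H => c H Hc; nia.
Qed.

Lemma Vb0 : Vb 0 = 0%N.
Proof. by rewrite VbE big_seq1. Qed.
Lemma Vb1 : Vb 1 = 2%N.
Proof. by have := Vb_closed 1; rewrite bin1 /=; lia. Qed.

Unset Implicit Arguments.
From Stdlib Require Import Reals Lra.
From Coquelicot Require Import Coquelicot.
Open Scope R_scope.

Definition a (n : nat) : R := INR (Vb (S n)).

Lemma a_rec n : (INR n + 1) * a (S n) = (4 * INR n + 10) * a n.
Proof.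
unfold a. have H := f_equal INR (Vb_rec2 n).
rewrite !mult_INR plus_INR mult_INR S_INR in H.
replace (INR 4) with 4 in H by (simpl; lra).
replace (INR 10) with 10 in H by (simpl; lra). lra.
Qed.

Lemma a_pos n : 0 < a n.
Proof. unfold a. apply lt_0_INR. apply/ssrnat.ltP. exact: Vb_pos. Qed.

Lemma a0 : a 0 = 2.
Proof. unfold a. by rewrite Vb1. Qed.

Lemma lim_ratio : is_lim_seq (fun n => Rabs (a (S n) / a n)) 4.
Proof.
apply is_lim_seq_ext with (fun n => 4 + 6 * / INR (S n)).
  move=> n. have H := a_rec n. have Hp := a_pos n. have Hp' := a_pos (S n). have Hn := pos_INR n.
  rewrite Rabs_pos_eq.
  - rewrite S_INR. field_simplify_eq. lra. split; lra.
  - apply Rmult_le_pos; [lra| apply Rlt_le, Rinv_0_lt_compat; lra].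
have H1 : is_lim_seq (fun n => INR (S n)) p_infty by apply (is_lim_seq_incr_1 INR p_infty), is_lim_seq_INR.
have H2 := is_lim_seq_inv _ _ H1 ltac:(discriminate).
have H3 := is_lim_seq_scal_l _ 6 _ H2.
simpl in H3. rewrite Rmult_0_r in H3.
have H4 := is_lim_seq_plus' _ _ 4 0 (is_lim_seq_const 4) H3.
by rewrite Rplus_0_r in H4.
Qed.

Lemma radius : CV_radius a = Finite (/ 4).
Proof.
apply CV_radius_finite_DAlembert.
- move=> n. have := a_pos n. lra.
- lra.
- exact lim_ratio.
Qed.

Lemma inside x : Rabs x < / 4 -> Rbar_lt (Rabs x) (CV_radius a).
Proof. by rewrite radius. Qed.
Lemma inside' x : Rabs x < / 4 -> Rbar_lt (Rabs x) (CV_radius (PS_derive a)).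
Proof. by rewrite CV_radius_derive radius. Qed.

Lemma coefs n : PS_minus (PS_derive a) (PS_scal 4 (PS_incr_1 (PS_derive a))) n = PS_scal 10 a n.
Proof.
case: n => [|n]; rewrite /PS_minus /PS_scal /PS_incr_1 /PS_derive /plus /opp /scal /mult /zero /=;
  rewrite /mult /= /zero /=.
- have := a_rec 0. simpl. lra.
- change (match n with 0%N => 1 | _.+1 => INR n + 1 end) with (INR (S n)).
  have := a_rec (S n). nra.
Qed.

Lemma ode x : Rabs x < / 4 -> (1 - 4 * x) * PSeries (PS_derive a) x = 10 * PSeries a x.
Proof.
move=> Hx.
have HD := PSeries_correct _ _ (CV_radius_inside _ _ (inside' x Hx)).
have HG := PSeries_correct _ _ (CV_radius_inside _ _ (inside x Hx)).
have H1 := is_pseries_incr_1 _ _ _ HD.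
have H2 := is_pseries_scal 4 _ _ _ (Rmult_comm _ _) H1.
have H3 := is_pseries_minus _ _ _ _ _ HD H2.
have H4 := is_pseries_ext _ _ _ _ coefs H3.
have H5 := is_pseries_scal 10 _ _ _ (Rmult_comm _ _) HG.
have E1 := is_pseries_unique _ _ _ H4.
have E2 := is_pseries_unique _ _ _ H5.
rewrite E1 in E2. move: E2. unfold plus, opp, scal, mult; simpl. unfold mult; simpl. lra.
Qed.

Definition kk (t : R) := (1 - 4 * t) ^ 2 * sqrt (1 - 4 * t).

Lemma kk_der c : c < / 4 -> is_derive kk c (-10 * (1 - 4 * c) * sqrt (1 - 4 * c)).
Proof.
move=> Hc. unfold kk. auto_derive. lra.
replace (1 + - (4 * c)) with (1 - 4 * c) by ring.
have Hu : 0 < 1 - 4 * c by lra.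
have Hs := sqrt_sqrt _ (Rlt_le _ _ Hu).
have Hs0 := sqrt_lt_R0 _ Hu.
move: Hs Hs0; move: (sqrt (1 - 4 * c)) => s Hs Hs0.
rewrite -Hs. field. lra.
Qed.

Lemma h_der c : Rabs c < / 4 -> is_derive (fun t => PSeries a t * kk t) c 0.
Proof.
move=> Hc.
have Hg := is_derive_PSeries a c (inside c Hc).
have Hk := kk_der c ltac:(move: Hc; rewrite /Rabs; case: Rcase_abs; lra).
have H := is_derive_mult _ _ _ _ _ Hg Hk (fun n m => Rmult_comm n m).
have E : plus (mult (PSeries (PS_derive a) c) (kk c)) (mult (PSeries a c) (-10 * (1 - 4 * c) * sqrt (1 - 4 * c))) = 0.
  rewrite /plus /mult /= /kk.
  have O := ode c Hc.
  have -> : PSeries (PS_derive a) c * ((1 - 4 * c) ^ 2 * sqrt (1 - 4 * c)) =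
     ((1 - 4 * c) * PSeries (PS_derive a) c) * ((1 - 4 * c) * sqrt (1 - 4 * c)) by ring.
  rewrite O; ring.
by rewrite E in H.
Qed.

Lemma g_closed x : Rabs x < / 4 -> PSeries a x * kk x = 2.
Proof.
move=> Hx.
have [c [Hc _]] := MVT_cor4 (fun t => PSeries a t * kk t) (fun _ => 0) 0 (Rabs x)
   ltac:(move=> c; rewrite Rminus_0_r => Hc; apply h_der; lra) x ltac:(rewrite Rminus_0_r; lra).
move: Hc. rewrite PSeries_0 a0 /kk. 
replace (1 - 4 * 0) with 1 by ring. rewrite sqrt_1. lra.
Qed.


Lemma part2 (x : R) : Rabs x < / 4 ->
     is_series (fun n : nat => (INR (Vb n) * x ^ n)%R)
       ((8 * x * (1 + sqrt (1 - 4 * x) - x * (3 + sqrt (1 - 4 * x))))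
        / ((1 - 4 * x) * (1 - 4 * x + sqrt (1 - 4 * x)) ^ 3))%R.
Proof.
move=> Hx.
have HG := PSeries_correct _ _ (CV_radius_inside _ _ (inside x Hx)).
have H1 := is_pseries_incr_1 _ _ _ HG.
have H2 : is_series (fun n => INR (Vb n) * x ^ n) (x * PSeries a x).
  apply: is_series_ext _ _ _ _ H1 => n.
  case: n => [|n]; rewrite /PS_incr_1 pow_n_pow /scal /= /mult /= /zero /=.
  - rewrite Vb0 /=; ring.
  - rewrite /a; ring.
have Hg := g_closed x Hx.
have Hax : Rabs x < / 4 := Hx.
have Hu : 0 < 1 - 4 * x by move: Hax; rewrite /Rabs; case: Rcase_abs; lra.
have Hs := sqrt_sqrt _ (Rlt_le _ _ Hu).
have Hs0 := sqrt_lt_R0 _ Hu.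
move: Hg Hs Hs0 H2; rewrite /kk; move: (sqrt (1 - 4 * x)) (PSeries a x) => s G Hg Hs Hs0 H2.
have HG' : G = 2 / ((1 - 4 * x) ^ 2 * s).
  rewrite -Hg. field. split; nra.
rewrite HG' in H2.
have Hxs : x = (1 - s * s) / 4 by lra.
move: H2; rewrite -Hs. 
set L := (x * _). set R' := (_ / _).
have -> : L = R'.
  rewrite /L /R' Hxs. field. nra.
done.
Qed.

Theorem proposition6p4 :
  (forall n : nat,
     (Vb n =
       (2 * xmul Vb n
        + 2 * xmul (xmul (fmul Mb Vc)) n
        + 2 * xmul (xmul (fmul Mc Vb)) n
        + 2 * xmul (xmul (fmul Vc (dx_x Mc))) n
        + 2 * xmul Nb n
        + 2 * xmul (dx_x Nc) n))%nat)
  /\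
  (forall x : R, (Rabs x < / 4)%R ->
     is_series (fun n : nat => (INR (Vb n) * x ^ n)%R)
       ((8 * x * (1 + sqrt (1 - 4 * x) - x * (3 + sqrt (1 - 4 * x))))
        / ((1 - 4 * x) * (1 - 4 * x + sqrt (1 - 4 * x)) ^ 3))%R).
Proof.
split.
- exact: part1.
- exact: part2.
Qed.
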